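(* Let $G$ be a graph of order $n$. If $\alpha(G)\ge n-F(D_n)$, then $G$ is Diophantine.
   Context: A graph $G$ with $n$ vertices is Diophantine if there is a bijection $f:V(G)\to\{1,\dots,n\}$ with $\gcd(f(u),f(v))\mid n$ for every edge $uv$. $D_n$ is the graph on $\{1,\dots,n\}$ with distinct $a,b$ adjacent iff $\gcd(a,b)\mid n$ (the maximal Diophantine graph of order $n$). $\alpha(G)$ is the independence number of $G$, and $F(D_n)$ is the number of vertices of degree $n-1$ in $D_n$. *)

(* Defs.v *)
From mathcomp Require Import all_boot.
Set Implicit Arguments. Unset Strict Implicit. Unset Printing Implicit Defensive.

(* A (simple) graph on the finite vertex type T is given by an adjacency
   relation e : rel T, assumed symmetric and irreflexive where used.
   Its order is #|T|. *)

Definition independent (T : finType) (e : rel T) (S : {set T}) : bool :=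
  [forall x in S, forall y in S, ~~ e x y].

Definition indep_number (T : finType) (e : rel T) : nat :=
  \max_(S : {set T} | independent e S) #|S|.

(* G is Diophantine: there is a bijection f : V(G) -> {1,...,n}, here
   encoded as a bijection g : T -> 'I_n with f x = (g x).+1, such that
   gcd(f u, f v) divides n for every edge uv. *)
Definition diophantine (T : finType) (e : rel T) : Prop :=
  exists g : T -> 'I_#|T|, bijective g /\
    forall u v, e u v -> gcdn (g u).+1 (g v).+1 %| #|T|.

(* D_n : vertices {1..n} (encoded as i : 'I_n standing for i.+1), distinct a b
   adjacent iff gcd(a,b) | n. *)
Definition Dn_adj (n : nat) : rel 'I_n :=
  fun a b => (a != b) && (gcdn a.+1 b.+1 %| n).

(* F(D_n): number of vertices of degree n-1 in D_n, i.e. adjacent to every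
   other vertex. *)
Definition F_Dn (n : nat) : nat :=
  #|[set a : 'I_n | [forall b : 'I_n, (b != a) ==> Dn_adj b a]]|.

(* Main.v *)
Require Import Defs.
From mathcomp Require Import all_boot.
From mathcomp Require Import zify.

Lemma bij_into (A B : finType) (d : A -> B) (X : {set A}) (Y : {set B}) :
  #|A| = #|B| -> #|X| <= #|Y| ->
  exists g : A -> B, bijective g /\ forall x, x \in X -> g x \in Y.
Proof.
move=> AB XY.
pose sA := enum X ++ enum (~: X).
pose sB := enum Y ++ enum (~: Y).
have szA : size sA = #|A| by rewrite size_cat -!cardE cardsC.
have szB : size sB = #|B| by rewrite size_cat -!cardE cardsC.
have inA x : x \in sA by rewrite mem_cat !mem_enum in_setC; case: (x \in X).
have uB : uniq sB.
  rewrite cat_uniq !enum_uniq andbT /=. apply/hasPn => y.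
  by rewrite /= !mem_enum in_setC.
have ltA x : index x sA < size sB by rewrite szB -AB -szA index_mem.
exists (fun x => nth (d x) sB (index x sA)); split.
  apply: inj_card_bij; last by rewrite AB.
  move=> x y /eqP; rewrite (set_nth_default (d x) (d y)) // nth_uniq // => /eqP.
  by move=> h; rewrite -(nth_index x (inA x)) h nth_index.
move=> x xX; rewrite /sA index_cat mem_enum xX nth_cat.
have lt : index x (enum X) < size (enum Y).
  rewrite -cardE; apply: (leq_trans _ XY).
  by rewrite cardE index_mem mem_enum.
by rewrite lt -(mem_enum (mem Y)) mem_nth.
Qed.

Theorem mainTheorem13 (T : finType) (e : rel T)
  (e_sym : symmetric e) (e_irr : irreflexive e) :
  #|T| - F_Dn #|T| <= indep_number e -> diophantine e.
Proof.
move=> H.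
have [S indS eqS] := @eq_bigmax_cond _ [pred S : {set T} | independent e S]
  (fun S => #|S|) ltac:(apply/card_gt0P; exists set0; apply/forallP => x; 
                        by rewrite inE).
have eqS' : indep_number e = #|S| by rewrite -eqS.
rewrite eqS' in H.
have XY : #|~: S| <= F_Dn #|T|.
  rewrite cardsCs setCK leq_subLR addnC; by rewrite leq_subLR in H.
have [g [gbij gU]] := @bij_into T 'I_#|T| enum_rank (~: S) _
  (esym (card_ord _)) XY.
exists g; split => // u v euv.
have ginj := bij_inj gbij.
have uv : u != v by apply: contraTneq euv => ->; rewrite e_irr.
have gne : g u != g v by apply: contra uv => /eqP /ginj ->.
case uS: (u \in S).
- case vS: (v \in S).
  + by move: indS; rewrite inE => /forallP /(_ u) /implyP /(_ uS) /forallP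
      /(_ v) /implyP /(_ vS); rewrite euv.
  + have := gU v; rewrite in_setC vS inE => /(_ isT) /forallP /(_ (g u)).
    by rewrite gne /= /Dn_adj gne.
- have := gU u; rewrite in_setC uS inE => /(_ isT) /forallP /(_ (g v)).
  by rewrite eq_sym gne /= /Dn_adj eq_sym gne /= gcdnC.
Qed.
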